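(* Let $f\colon 2^{\mathcal{N}}\to\mathbb{R}$ be non-negative and submodular, let $k$ be a positive integer, let $\varepsilon>0$, and let $S,O\subseteq\mathcal{N}$ with $|S|=|O|=k$. Assume $\mathcal{N}\setminus S$ contains at least $k$ elements $d$ with $f(d\mid S)\ge 0$. Suppose that for every integer $0\le t\le k$, \[ \max_{T\subseteq\mathcal{N}\setminus S,\ |T|=t}\ \sum_{u\in T} f(u\mid S)\ \le\ \min_{T\subseteq S,\ |T|=t}\ \sum_{v\in T} f(v\mid S-v)\ +\ \varepsilon f(S). \] Then \[ f(S)\ \ge\ \frac{f(S\cup O)+f(S\cap O)}{2+\varepsilon}\qquad\text{and}\qquad f(S)\ \ge\ \frac{f(S\cap O)}{1+\varepsilon}. \]
   Context: Notation: $f(u\mid A)=f(A\cup\{u\})-f(A)$; $S-v=S\setminus\{v\}$. Submodularity: $f(A\cup\{s\})-f(A)\ge f(B\cup\{s\})-f(B)$ for all $A\subseteq B\subseteq\mathcal{N}$, $s\notin B$. *)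

(* Defs.v *)
From mathcomp Require Import all_boot all_order all_algebra.
Set Implicit Arguments. Unset Strict Implicit. Unset Printing Implicit Defensive.
Import Order.TTheory GRing.Theory Num.Theory.
Local Open Scope ring_scope.

Definition marg (T : finType) (R : pzRingType) (f : {set T} -> R) (u : T) (A : {set T}) : R :=
  f (u |: A) - f A.

Definition submodular (T : finType) (R : realDomainType) (f : {set T} -> R) : Prop :=
  forall (A B : {set T}) (s : T), A \subset B -> s \notin B ->
    f (s |: B) - f B <= f (s |: A) - f A.

Definition nonneg_setfun (T : finType) (R : realDomainType) (f : {set T} -> R) : Prop :=
  forall A : {set T}, 0 <= f A.

(* Main.v *)
Require Import Defs.
From mathcomp Require Import all_boot all_order all_algebra.
From mathcomp Require Import ring lra.
Import Order.TTheory GRing.Theory Num.Theory.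
Local Open Scope ring_scope.

Lemma sub_card_ex (T : finType) (n : nat) (D : {set T}) :
  (n <= #|D|)%N -> exists T1 : {set T}, T1 \subset D /\ #|T1| = n.
Proof.
elim: n => [|n IH] H.
  by exists set0; rewrite sub0set cards0.
have [T1 [sT cT]] := IH (ltnW H).
have : (0 < #|D :\: T1|)%N by rewrite cardsD (setIidPr sT) cT subn_gt0.
case/card_gt0P => x; rewrite inE => /andP [xT xD].
exists (x |: T1); split; first by rewrite subUset sub1set xD sT.
by rewrite cardsU1 xT cT.
Qed.

Lemma L1 (T : finType) (R : realFieldType) (f : {set T} -> R) :
  submodular f -> forall n (X Y : {set T}), #|Y| = n ->
  f (X :|: Y) - f X <= \sum_(u in Y) marg f u X.
Proof.
move=> sub; elim=> [|n IH] X Y cY.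
  by move/cards0_eq: cY => ->; rewrite setU0 big_set0 subrr.
have : (0 < #|Y|)%N by rewrite cY.
case/card_gt0P => u uY.
rewrite (big_setD1 _ uY) /=.
have cY' : #|Y :\ u| = n by move: cY; rewrite (cardsD1 u Y) uY add1n => -[].
have := IH X _ cY'.
have eY : X :|: Y = u |: (X :|: Y :\ u).
  by rewrite setUCA setD1K.
have hm : f (X :|: Y) - f (X :|: Y :\ u) <= marg f u X.
  rewrite /marg eY.
  case uX: (u \in X).
    have e1 : forall a (A : {set T}), a \in A -> a |: A = A.
      by move=> a A aA; apply/setUidPr; rewrite sub1set.
    rewrite (e1 u (X :|: Y :\ u)) ?inE ?uX // (e1 u X uX) !subrr //.
  apply: sub; first exact: subsetUl.
  by rewrite !inE uX eqxx.
lra.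
Qed.

Lemma L2 (T : finType) (R : realFieldType) (f : {set T} -> R) :
  submodular f -> forall n (W Z B : {set T}), #|B| = n ->
  Z :&: B = set0 -> Z :|: B \subset W ->
  \sum_(v in B) marg f v (W :\ v) <= f (Z :|: B) - f Z.
Proof.
move=> sub; elim=> [|n IH] W Z B cB dZB sW.
  by move/cards0_eq: cB => ->; rewrite setU0 big_set0 subrr.
have : (0 < #|B|)%N by rewrite cB.
case/card_gt0P => u uB.
rewrite (big_setD1 _ uB) /=.
have cB' : #|B :\ u| = n by move: cB; rewrite (cardsD1 u B) uB add1n => -[].
have uZ : u \notin Z.
  apply/negP => uZ; have : u \in Z :&: B by rewrite inE uZ.
  by rewrite dZB inE.
have dZB' : Z :&: (B :\ u) = set0.
  apply/eqP; rewrite -subset0 -dZB; apply: setIS; exact: subD1set.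
have sW' : Z :|: B :\ u \subset W.
  apply: subset_trans sW; apply: setUS; exact: subD1set.
have := IH W Z _ cB' dZB' sW'.
have eB : Z :|: B = u |: (Z :|: B :\ u) by rewrite setUCA setD1K.
have hm : marg f u (W :\ u) <= f (Z :|: B) - f (Z :|: B :\ u).
  rewrite /marg eB.
  have uW : u \in W by apply: (subsetP sW); rewrite inE uB orbT.
  rewrite (setD1K uW).
  have := sub (Z :|: B :\ u) (W :\ u) u.
  rewrite (setD1K uW); apply.
    apply/subsetP => x; rewrite !inE => /orP [xZ|/andP [xu xB]].
      rewrite (subsetP sW) ?inE ?xZ // andbT.
      by apply/eqP => exu; move: uZ; rewrite -exu xZ.
    by rewrite xu (subsetP sW) // inE xB orbT.
  by rewrite !inE eqxx.
lra.
Qed.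

Theorem mainTheorem3 (T : finType) (R : realFieldType) (f : {set T} -> R)
  (k : nat) (eps : R) (S O : {set T}) :
  nonneg_setfun f -> submodular f ->
  (0 < k)%N -> 0 < eps ->
  #|S| = k -> #|O| = k ->
  (k <= #|[set d in ~: S | (0 <= marg f d S)%R]|)%N ->
  (forall t : nat, (t <= k)%N ->
     forall T1 T2 : {set T},
       T1 \subset ~: S -> #|T1| = t ->
       T2 \subset S -> #|T2| = t ->
       \sum_(u in T1) marg f u S <=
       \sum_(v in T2) marg f v (S :\ v) + eps * f S) ->
  (f (S :|: O) + f (S :&: O)) / (2 + eps) <= f S /\
  f (S :&: O) / (1 + eps) <= f S.
Proof.
move=> nn sub k0 e0 cS cO cD H.
set m := #|S :\: O|.
have cA : #|O :\: S| = m by rewrite /m !cardsD cS cO setIC.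
have mk : (m <= k)%N by rewrite /m -cS; apply: subset_leq_card; apply: subsetDl.
have sB : S :\: O \subset S by apply: subsetDl.
have hL2 := @L2 _ _ f sub m S (S :&: O) (S :\: O) (erefl m).
have dZ : (S :&: O) :&: (S :\: O) = set0.
  by apply/setP => x; rewrite !inE; case: (x \in O); rewrite ?andbF.
have eS : (S :&: O) :|: (S :\: O) = S by rewrite setID.
have := hL2 dZ; rewrite eS => /(_ (subxx _)) h2.
have h1 := @L1 _ _ f sub _ S (O :\: S) (erefl _).
have eSO : S :|: O :\: S = S :|: O by rewrite setDE setUIr setUCr setIT.
rewrite eSO in h1.
have hA := H m mk (O :\: S) (S :\: O) (subsetDr _ _) cA sB (erefl _).
have fS := nn S.
have fSO := nn (S :|: O).
have fI := nn (S :&: O).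
have [T1 [sT1 cT1]] := @sub_card_ex _ _ _ (leq_trans mk cD).
have sD : [set d in ~: S | 0 <= marg f d S] \subset ~: S.
  by apply/subsetP => x; rewrite inE => /andP [].
have hT := H m mk T1 (S :\: O) (subset_trans sT1 sD) cT1 sB (erefl _).
have pos : 0 <= \sum_(u in T1) marg f u S.
  apply: sumr_ge0 => u uT; move: (subsetP sT1 u uT); rewrite inE.
  by case/andP.
split; rewrite ler_pdivrMr; lra.
Qed.
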